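(* Let $f\in\mathbb{R}^{d_1\times\cdots\times d_m}$, $f\ge0$, be weakly irreducible and $1<p_1,\ldots,p_m<\infty$ such that there is $i\in[m]$ with $(m-1)p_i'\le p_k$ for every $k\in[m]\setminus\{i\}$. Define $\mu:\mathcal S^{d-d_i}_{++}\times\mathcal S^{d-d_i}_{++}\to\mathbb{R}$ by $$\mu(\mathbf x,\mathbf y)=\ln\Bigg(\prod_{l\in[m]\setminus\{i\}}\frac{\max_{j_l\in[d_l]}(x_{l,j_l}/y_{l,j_l})^{p_l-1}}{\min_{j_l\in[d_l]}(x_{l,j_l}/y_{l,j_l})^{p_l-1}}\Bigg)$$ and $G:\mathcal S^{d-d_i}_{++}\to\mathcal S^{d-d_i}_{++}$ by $G(\mathbf x)=\big(s_{i,k}(\mathbf x)/\|s_{i,k}(\mathbf x)\|_{p_k}\big)_{k\in[m]\setminus\{i\}}$. Then $\mu(G(\mathbf x),G(\mathbf y))\le\mu(\mathbf x,\mathbf y)$ for all $\mathbf x,\mathbf y\in\mathcal S^{d-d_i}_{++}$.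
   Context: $f$ is identified with the multilinear form $f(\mathbf x)=\sum f_{j_1,\ldots,j_m}x_{1,j_1}\cdots x_{m,j_m}$; $\nabla_kf(\mathbf x)$ is the vector of partials $\partial f/\partial x_{k,j_k}$ (independent of $\mathbf x_k$, so $\nabla_if$ is defined on $\mathcal R^{d-d_i}=\prod_{k\ne i}\mathbb{R}^{d_k}$). $p'=p/(p-1)$; $\psi_q(\mathbf y)_j=|y_j|^{q-1}\mathrm{sign}(y_j)$. $\mathcal S^{d-d_i}_{++}=\{\mathbf x\in\mathcal R^{d-d_i}:\mathbf x>0,\|\mathbf x_k\|_{p_k}=1\ \forall k\ne i\}$. For $k\ne i$, $s_{i,k}(\mathbf x)=\psi_{p_k'}\big(\nabla_kf(\mathbf x_1,\ldots,\mathbf x_{i-1},\psi_{p_i'}(\nabla_if(\mathbf x)),\mathbf x_{i+1},\ldots,\mathbf x_m)\big)$ (entrywise positive for $\mathbf x>0$ under weak irreducibility). Weak irreducibility: the undirected graph on $\bigcup_k\{k\}\times[d_k]$ with $(k,j_k)\sim(l,j_l)$ ($k\ne l$) iff $f_{j_1,\ldots,j_m}>0$ for some choice of the remaining indices, is connected. *)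

(* Defs.v *)
From HB Require Import structures.
From mathcomp Require Import all_boot all_order all_algebra.
From mathcomp Require Import all_classical all_reals all_analysis.
Set Implicit Arguments. Unset Printing Implicit Defensive.
Import Order.TTheory GRing.Theory Num.Theory.
Local Open Scope ring_scope.

Section Defs.
Variables (R : realType) (m : nat) (d : 'I_m -> nat).

Definition midx := {dffun forall k : 'I_m, 'I_(d k)}.
(* a point of prod_k R^{d_k}: x k is the block x_k *)
Definition mpoint := forall k : 'I_m, 'I_(d k) -> R.
Definition mtensor := midx -> R.

Definition hconj (p : R) : R := p / (p - 1).

Definition psi (q : R) (n : nat) (y : 'I_n -> R) : 'I_n -> R :=
  fun j => Num.sg (y j) * (`|y j| `^ (q - 1)).

Definition pnorm (p : R) (n : nat) (y : 'I_n -> R) : R :=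
  (\sum_(j < n) `|y j| `^ p) `^ (p^-1).

(* partial derivatives of the multilinear form, with the factors x_{l,j_l}
   given by an evaluation function e j l *)
Definition grad_at (f : mtensor) (e : midx -> 'I_m -> R) (k : 'I_m)
  : 'I_(d k) -> R :=
  fun t => \sum_(j : midx | j k == t) f j * \prod_(l < m | l != k) e j l.

Arguments grad_at f e k : clear implicits.
Definition grad (f : mtensor) (x : mpoint) (k : 'I_m) : 'I_(d k) -> R :=
  grad_at f (fun j l => x l (j l)) k.

Arguments grad f x k : clear implicits.
Definition s_ik (f : mtensor) (p : 'I_m -> R) (i : 'I_m) (x : mpoint) (k : 'I_m)
  : 'I_(d k) -> R :=
  let w := psi (hconj (p i)) (grad f x i) in
  psi (hconj (p k))
      (grad_at f (fun j l => if l == i then w (j i) else x l (j l)) k).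

Arguments s_ik f p i x k : clear implicits.
(* G(x); the (irrelevant) i-th block is left unchanged *)
Definition Gmap (f : mtensor) (p : 'I_m -> R) (i : 'I_m) (x : mpoint) : mpoint :=
  fun k t => if k == i then x k t
             else s_ik f p i x k t / pnorm (p k) (s_ik f p i x k).

(* S^{d-d_i}_{++} (only blocks k <> i are constrained) *)
Definition Spp (p : 'I_m -> R) (i : 'I_m) (x : mpoint) : Prop :=
  forall k : 'I_m, k != i ->
    (forall t, 0 < x k t) /\ pnorm (p k) (x k) = 1.

(* max and min over j of a (positive) family; the min uses the max as seed,
   which does not change the value when the index set is nonempty *)
Definition maxj (n : nat) (F : 'I_n -> R) : R := \big[Num.max/0]_(j < n) F j.
Definition minj (n : nat) (F : 'I_n -> R) : R :=
  \big[Num.min/maxj F]_(j < n) F j.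

Definition mu (p : 'I_m -> R) (i : 'I_m) (x y : mpoint) : R :=
  ln (\prod_(l < m | l != i)
        (maxj (fun j => (x l j / y l j) `^ (p l - 1)) /
         minj (fun j => (x l j / y l j) `^ (p l - 1)))).

Definition vertex := {k : 'I_m & 'I_(d k)}.
Definition wi_edge (f : mtensor) : rel vertex :=
  fun u v => (tag u != tag v) &&
    [exists j : midx, [&& j (tag u) == tagged u, j (tag v) == tagged v
                        & 0 < f j]].
Definition weakly_irreducible (f : mtensor) : Prop :=
  forall u v : vertex, connect (wi_edge f) u v.

End Defs.
Arguments grad_at {R m d} f e k.
Arguments grad {R m d} f x k.
Arguments s_ik {R m d} f p i x k.
Arguments hconj {R} p.
Arguments psi {R} q {n} y.
Arguments pnorm {R} p {n} y.
Arguments maxj {R n} F.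
Arguments minj {R n} F.

(* Main.v *)
Require Import Defs.
From HB Require Import structures.
From mathcomp Require Import all_boot all_order all_algebra.
From mathcomp Require Import all_classical all_reals all_analysis.
From mathcomp Require Import lra ring.
Import Order.TTheory GRing.Theory Num.Theory.
Local Open Scope ring_scope.
Set Implicit Arguments.
Unset Strict Implicit.

Section Aux.
Variable R : realType.

Definition Bnd n (u v : 'I_n -> R) (a b : R) :=
  forall t, 0 < v t /\ expR a * v t <= u t <= expR b * v t.
Arguments Bnd {n} u v a b.

Lemma Bnd_pos n (u v : 'I_n -> R) a b : Bnd u v a b -> forall t, 0 < u t.
Proof.
move=> H t; have [h1 /andP[h2 _]] := H t.
by apply: lt_le_trans h2; rewrite mulr_gt0 // expR_gt0.
Qed.

Lemma Bnd_ext n (u v u' v' : 'I_n -> R) a b :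
  (forall t, u t = u' t) -> (forall t, v t = v' t) -> Bnd u v a b -> Bnd u' v' a b.
Proof. by move=> Hu Hv H t; rewrite -Hu -Hv. Qed.

Lemma maxj_ge n (F : 'I_n -> R) j : F j <= maxj F.
Proof. exact: le_bigmax. Qed.

Lemma minj_le n (F : 'I_n -> R) j : minj F <= F j.
Proof. exact: bigmin_le. Qed.

Lemma maxj_le n (F : 'I_n -> R) C : 0 <= C -> (forall j, F j <= C) -> maxj F <= C.
Proof. by move=> h0 h; apply: bigmax_le. Qed.

Lemma minj_ge n (F : 'I_n -> R) c : (0 < n)%N -> (forall j, c <= F j) -> c <= minj F.
Proof.
move=> hn h; apply: le_bigmin => [|j _]; last exact: h.
apply: (le_trans (h (Ordinal hn))). exact: maxj_ge.
Qed.

Lemma factor_bnd n (u v : 'I_n -> R) a b q : (0 < n)%N -> 0 < q -> Bnd u v a b ->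
  0 < maxj (fun j => (u j / v j) `^ q) / minj (fun j => (u j / v j) `^ q)
  <= expR (q * (b - a)).
Proof.
move=> hn hq H.
have hF : forall j, expR (a * q) <= (u j / v j) `^ q <= expR (b * q).
  move=> j; have [hv /andP[h1 h2]] := H j.
  have hu := Bnd_pos H j.
  have hq0 : 0 <= q by exact: ltW.
  have hr : 0 <= u j / v j by rewrite divr_ge0 // ltW.
  rewrite !expRM; apply/andP; split; apply: ge0_ler_powR => //.
  - by rewrite nnegrE ltW ?expR_gt0.
  - by rewrite ler_pdivlMr.
  - by rewrite nnegrE ltW ?expR_gt0.
  - by rewrite ler_pdivrMr.
have hmin : expR (a * q) <= minj (fun j => (u j / v j) `^ q).
  by apply: minj_ge => // j; case/andP: (hF j).
have hmax : maxj (fun j => (u j / v j) `^ q) <= expR (b * q).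
  by apply: maxj_le => [|j]; [exact: ltW (expR_gt0 _)| case/andP: (hF j)].
have hmp : 0 < minj (fun j => (u j / v j) `^ q) by apply: lt_le_trans hmin; exact: expR_gt0.
have hMp : 0 < maxj (fun j => (u j / v j) `^ q).
  apply: lt_le_trans (maxj_ge _ (Ordinal hn)).
  by apply: lt_le_trans (expR_gt0 (a * q)) _; case/andP: (hF (Ordinal hn)).
apply/andP; split; first by rewrite divr_gt0.
rewrite ler_pdivrMr // mulrBr expRB [q * b]mulrC [q * a]mulrC.
rewrite mulrAC ler_pdivlMr ?expR_gt0 //.
by apply: ler_pM => //; apply: ltW => //; exact: expR_gt0.
Qed.


Lemma psi_posE q n (z : 'I_n -> R) t : 0 < z t -> psi q z t = z t `^ (q - 1).
Proof. by move=> h; rewrite /psi gtr0_sg // gtr0_norm // mul1r. Qed.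

Lemma psi_bnd q n (u v : 'I_n -> R) a b : 0 <= q - 1 -> Bnd u v a b ->
  Bnd (psi q u) (psi q v) ((q - 1) * a) ((q - 1) * b).
Proof.
move=> hr H t; have hu := Bnd_pos H t; have [hv /andP[h1 h2]] := H t.
rewrite !psi_posE //; split; first exact: powR_gt0.
rewrite [(q - 1) * a]mulrC [(q - 1) * b]mulrC !expRM.
have he : forall c : R, 0 <= expR c by move=> c; exact: ltW (expR_gt0 c).
have hv0 := ltW hv; have hu0 := ltW hu.
rewrite -!powRM ?he //; apply/andP; split; apply: ge0_ler_powR => //.
  all: by rewrite nnegrE mulr_ge0.
Qed.

Lemma scale_bnd n (u v : 'I_n -> R) a b cu cv : 0 < cu -> 0 < cv -> Bnd u v a b ->
  Bnd (fun t => u t / cu) (fun t => v t / cv) (a + ln (cv / cu)) (b + ln (cv / cu)).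
Proof.
move=> hu hv H t; have [hvt /andP[h1 h2]] := H t.
have hc : 0 < cv / cu by rewrite divr_gt0.
split; first by rewrite divr_gt0.
rewrite !expRD lnK ?posrE //.
have E : forall c, expR c * (cv / cu) * (v t / cv) = expR c * v t / cu.
  move=> c; have cu0 : cu != 0 by rewrite gt_eqF.
  have cv0 : cv != 0 by rewrite gt_eqF.
  by field; rewrite cu0 cv0.
rewrite !E !ler_pM2r ?invr_gt0 //; exact/andP.
Qed.

Lemma pnorm_pos pp n (z : 'I_n -> R) : (0 < n)%N -> (forall t, 0 < z t) -> 0 < pnorm pp z.
Proof.
move=> hn hz; apply: powR_gt0.
rewrite (bigD1 (Ordinal hn)) //=.
have h1 : 0 < `|z (Ordinal hn)| `^ pp by apply: powR_gt0; rewrite normr_gt0 gt_eqF.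
have h2 : 0 <= \sum_(i < n | i != Ordinal hn) `|z i| `^ pp.
  by apply: sumr_ge0 => j _; exact: powR_ge0.
lra.
Qed.


Lemma minj_gt0 n (F : 'I_n -> R) : (0 < n)%N -> (forall j, 0 < F j) -> 0 < minj F.
Proof.
move=> hn h; apply: lt_bigmin => [|j _]; last exact: h.
exact: lt_le_trans (h (Ordinal hn)) (maxj_ge F (Ordinal hn)).
Qed.

Lemma rhs_bnd n (x y : 'I_n -> R) q : (0 < n)%N -> 0 < q ->
  (forall t, 0 < x t) -> (forall t, 0 < y t) ->
  let F := fun j => (x j / y j) `^ q in
  [/\ 0 < minj F, minj F <= maxj F &
      Bnd x y (ln (minj F) / q) (ln (maxj F) / q)].
Proof.
move=> hn hq hx hy F.
have hF : forall j, 0 < F j by move=> j; apply: powR_gt0; rewrite divr_gt0.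
have hA := minj_gt0 hn hF.
have hAB : minj F <= maxj F := le_trans (minj_le F (Ordinal hn)) (maxj_ge F (Ordinal hn)).
split => // t; split => //.
have hxy : 0 < x t / y t by rewrite divr_gt0.
have E : ln (F t) = ln (x t / y t) * q by rewrite /F ln_powR mulrC.
apply/andP; split.
- rewrite -ler_pdivlMr // -[x t / y t]lnK ?posrE // ler_expR ler_pdivrMr // -E.
  by rewrite ler_ln ?posrE // ?minj_le.
- rewrite -ler_pdivrMr // -[x t / y t]lnK ?posrE // ler_expR ler_pdivlMr // -E.
  rewrite ler_ln ?posrE // ?maxj_ge //; exact: lt_le_trans hA hAB.
Qed.

Lemma comb m (i : 'I_m) (w : 'I_m -> R) c :
  \sum_(k | k != i) \sum_(l | l != k)
     (if l == i then c * (\sum_(l' | l' != i) w l') else w l)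
  = \sum_(l | l != i) (((m%:R - 1) * (c + 1) - 1) * w l).
Proof.
set S := \sum_(l' | l' != i) w l'.
have inner : forall k, k != i -> \sum_(l | l != k)
     (if l == i then c * S else w l) = c * S + S - w k.
  move=> k hk; rewrite (bigD1 i) 1?eq_sym //= eqxx.
  rewrite (eq_bigr w) => [|l /andP [_ /negbTE ->] //].
  rewrite (eq_bigl (fun l => (l != i) && (l != k))) => [|l]; last by rewrite andbC.
  rewrite /S (bigD1 k) //=.
  ring.
rewrite (eq_bigr _ inner) sumrB -mulr_sumr -/S.
have hm : (0 < m)%N := leq_ltn_trans (leq0n i) (ltn_ord i).
have hc : \sum_(k | k != i) (c * S + S) = (c * S + S) *+ #|predC1 i|.
  by rewrite -sumr_const; apply: eq_bigl => k; rewrite inE.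
rewrite hc cardC1 card_ord -mulr_natl.
have h1 : (m.-1 + 1)%N = m by rewrite addn1 prednK.
rewrite -{2}h1 natrD.
ring.
Qed.

End Aux.

Section Aux3.
Variables (R : realType) (m : nat) (d : 'I_m -> nat).

Lemma grad_bnd (f : mtensor R d) (e e' : midx d -> 'I_m -> R) k (a b : 'I_m -> R) :
  (forall j, 0 <= f j) ->
  (forall l, l != k -> forall j, 0 <= e' j l /\
       expR (a l) * e' j l <= e j l <= expR (b l) * e' j l) ->
  forall t, expR (\sum_(l | l != k) a l) * grad_at f e' k t <= grad_at f e k t
            <= expR (\sum_(l | l != k) b l) * grad_at f e' k t.
Proof.
move=> hf H t; rewrite /grad_at !mulr_sumr !expR_sum.
apply/andP; split; apply: ler_sum => j _; rewrite mulrCA -big_split /=;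
  apply: ler_wpM2l => //; apply: ler_prod => l hl; have [h0 /andP[h1 h2]] := H l hl j.
- by rewrite h1 mulr_ge0 // ltW // expR_gt0.
- by rewrite h2 (le_trans _ h1) // mulr_ge0 // ltW // expR_gt0.
Qed.

Lemma grad_pos (f : mtensor R d) (e : midx d -> 'I_m -> R) k (t : 'I_(d k)) :
  (forall j, 0 <= f j) -> (forall j l, l != k -> 0 < e j l) ->
  (exists j : midx d, j k = t /\ 0 < f j) -> 0 < grad_at f e k t.
Proof.
move=> hf he [j0 [hj0 hf0]]; rewrite /grad_at (bigD1 j0) ?hj0 ?eqxx //=.
have h1 : 0 < f j0 * \prod_(l < m | l != k) e j0 l.
  by rewrite mulr_gt0 // prodr_gt0 // => l hl; exact: he.
have h2 : 0 <= \sum_(i : midx d | (i k == t) && (i != j0)) f i * \prod_(l < m | l != k) e i l.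
  apply: sumr_ge0 => j _; rewrite mulr_ge0 // prodr_ge0 // => l hl; exact/ltW/he.
lra.
Qed.

Lemma wi_edge_ex (f : mtensor R d) : weakly_irreducible f ->
  forall u v : vertex d, u != v -> exists j : midx d, j (tag u) = tagged u /\ 0 < f j.
Proof.
move=> hw u v huv; have /connectP [[|v1 pth] hp hl] := hw u v.
  by rewrite hl eqxx in huv.
move: hp => /= /andP [/andP [_ /existsP [j /and3P [/eqP h1 _ h3]]] _].
by exists j.
Qed.

End Aux3.

Unset Implicit Arguments.
Set Strict Implicit.

Theorem proposition9 (R : realType) (m : nat) (d : 'I_m -> nat)
  (f : mtensor R d) (p : 'I_m -> R) (i : 'I_m) :
  (forall j, 0 <= f j) ->
  weakly_irreducible f ->
  (forall k, 1 < p k) ->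
  (forall k, k != i -> (m%:R - 1) * hconj (p i) <= p k) ->
  forall x y : mpoint R d, Spp p i x -> Spp p i y ->
    mu p i (Gmap f p i x) (Gmap f p i y) <= mu p i x y.
Proof.
move=> hf hw hp hpk x y hx hy.
have hq : forall l, 0 < p l - 1 by move=> l; rewrite subr_gt0.
have hq0 : forall l, p l - 1 != 0 by move=> l; rewrite gt_eqF.
have hrE : forall l, hconj (p l) - 1 = (p l - 1)^-1.
  by move=> l; rewrite /hconj; have := hq0 l; move=> h; field.
have hr : forall l, 0 < hconj (p l) - 1 by move=> l; rewrite hrE invr_gt0.
have hqr : forall l, (p l - 1) * (hconj (p l) - 1) = 1.
  by move=> l; rewrite hrE divff.
have dpos : forall l, l != i -> (0 < d l)%N.
  move=> l hl; rewrite lt0n; apply/negP => /eqP hd.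
  have [_ hn] := hx l hl.
  have hs : \sum_(j < d l) `|x l j| `^ p l = 0.
    by apply: big1 => -[jj hj] _; exfalso; move: hj; rewrite hd.
  move: hn; rewrite /pnorm hs powR0 ?invr_eq0 ?gt_eqF //.
    by move/eqP; rewrite eq_sym oner_eq0.
  exact: lt_trans (hp l).
have hxp : forall l, l != i -> forall t, 0 < x l t by move=> l hl; have [] := hx l hl.
have hyp : forall l, l != i -> forall t, 0 < y l t by move=> l hl; have [] := hy l hl.
pose F l j := (x l j / y l j) `^ (p l - 1).
pose al l := ln (minj (F l)) / (p l - 1).
pose bl l := ln (maxj (F l)) / (p l - 1).
have hRB : forall l, l != i -> [/\ 0 < minj (F l), minj (F l) <= maxj (F l) &
      Bnd (x l) (y l) (al l) (bl l)].
  move=> l hl; exact: rhs_bnd (dpos l hl) (hq l) (hxp l hl) (hyp l hl).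
have hw0 : forall l, l != i -> 0 <= bl l - al l.
  move=> l hl; have [h1 h2 _] := hRB l hl.
  rewrite subr_ge0 ler_pM2r ?invr_gt0 // ler_ln ?posrE //; exact: lt_le_trans h2.
have rhsE : mu p i x y = \sum_(l | l != i) ((p l - 1) * (bl l - al l)).
  rewrite /mu (eq_bigr (fun l => expR ((p l - 1) * (bl l - al l)))); last first.
    move=> l hl; have [h1 h2 _] := hRB l hl.
    have -> : (p l - 1) * (bl l - al l) = ln (maxj (F l)) - ln (minj (F l)).
      by rewrite /bl /al; have := hq0 l => h; field.
    by rewrite expRB !lnK ?posrE //; exact: lt_le_trans h2.
  by rewrite -expR_sum expRK.
rewrite rhsE.
have rhs0 : 0 <= \sum_(l | l != i) ((p l - 1) * (bl l - al l)).
  by apply: sumr_ge0 => l hl; rewrite mulr_ge0 ?hw0 //; exact: ltW.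
case: (posnP (d i)) => [hdi|hdi].
  have g0 : forall e k t, grad_at f e k t = 0.
    move=> e k t; apply: big1 => j _; exfalso; move: (j i).
    by case=> jj; rewrite hdi.
  have G0 : forall (z : mpoint R d) l t, l != i -> Gmap f p i z l t = 0.
    move=> z l t hl; rewrite /Gmap (negbTE hl) /s_ik /psi g0 sgr0.
    by rewrite !mul0r.
  have M0 : forall l, l != i ->
      maxj (fun j => (Gmap f p i x l j / Gmap f p i y l j) `^ (p l - 1)) = 0.
    move=> l hl; rewrite /maxj; apply: (big_ind (fun v : R => v = 0)) => //.
      by move=> a b -> ->; rewrite maxxx.
    by move=> j _; rewrite !G0 // mul0r powR0.
  rewrite /mu (eq_bigr (fun _ => 0)) => [|l hl]; last by rewrite M0 // mul0r.
  case: (pickP (fun l : 'I_m => l != i)) => [l0 hl0|hn].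
    by rewrite (bigD1 l0) //= mul0r ln0.
  by rewrite big_pred0 ?ln1.
pose i0 := Ordinal hdi.
pose wx := psi (hconj (p i)) (grad f x i).
pose wy := psi (hconj (p i)) (grad f y i).
pose Sa := \sum_(l | l != i) al l.
pose Sb := \sum_(l | l != i) bl l.
have hwB : forall k0, k0 != i ->
    Bnd wx wy ((hconj (p i) - 1) * Sa) ((hconj (p i) - 1) * Sb).
  move=> k0 hk0; apply: psi_bnd; first exact: ltW.
  move=> t; split.
    apply: grad_pos => //.
      by move=> j l hl; apply: hyp.
    have hne : Tagged (fun k => 'I_(d k)) t != Tagged (fun k => 'I_(d k)) (Ordinal (dpos k0 hk0)).
      by apply/eqP => /(congr1 tag) /= h; rewrite h eqxx in hk0.
    exact: (wi_edge_ex hw hne).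
  apply: grad_bnd => // l hl j; have [_ _ hb] := hRB l hl; have [h0 h1] := hb (j l).
  by split => //; exact: ltW.
pose ax l := if l == i then (hconj (p i) - 1) * Sa else al l.
pose bx l := if l == i then (hconj (p i) - 1) * Sb else bl l.
have hsB : forall k, k != i -> Bnd (s_ik f p i x k) (s_ik f p i y k)
    ((hconj (p k) - 1) * \sum_(l | l != k) ax l)
    ((hconj (p k) - 1) * \sum_(l | l != k) bx l).
  move=> k hk; rewrite /s_ik /=; apply: psi_bnd; first exact: ltW.
  move=> t; split.
    apply: grad_pos => //.
      move=> j l hl; case: ifP => [/eqP eli|hli]; first subst l.
        by have [] := hwB k hk (j i).
      by apply: hyp; rewrite hli.
    have hne : Tagged (fun k => 'I_(d k)) t != Tagged (fun k => 'I_(d k)) i0.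
      by apply/eqP => /(congr1 tag) /= h; rewrite h eqxx in hk.
    exact: (wi_edge_ex hw hne).
  apply: grad_bnd => // l hl j; rewrite /ax /bx; case: ifP => [/eqP eli|hli]; first subst l.
    have [h0 h1] := hwB k hk (j i).
    by split => //; exact: ltW.
  have hli' : l != i by rewrite hli.
  have [_ _ hb] := hRB l hli'; have [h0 h1] := hb (j l).
  by split => //; exact: ltW.
have hFk : forall k, k != i ->
    0 < maxj (fun j => (Gmap f p i x k j / Gmap f p i y k j) `^ (p k - 1)) /
        minj (fun j => (Gmap f p i x k j / Gmap f p i y k j) `^ (p k - 1))
      <= expR (\sum_(l | l != k) (bx l - ax l)).
  move=> k hk; have hs := hsB k hk.
  have hcx : 0 < pnorm (p k) (s_ik f p i x k) := pnorm_pos _ (dpos k hk) (Bnd_pos hs).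
  have hcy : 0 < pnorm (p k) (s_ik f p i y k).
    by apply: pnorm_pos (dpos k hk) _ => t; have [] := hs t.
  have hG := scale_bnd hcx hcy hs.
  have eG : forall z t, s_ik f p i z k t / pnorm (p k) (s_ik f p i z k) = Gmap f p i z k t.
    by move=> z t; rewrite /Gmap (negbTE hk).
  have hG' := Bnd_ext (eG x) (eG y) hG.
  have := factor_bnd (dpos k hk) (hq k) hG'.
  set dl := ln _.
  have -> : (p k - 1) * ((hconj (p k) - 1) * \sum_(l | l != k) bx l + dl -
     ((hconj (p k) - 1) * \sum_(l | l != k) ax l + dl)) = \sum_(l | l != k) (bx l - ax l).
    rewrite sumrB; transitivity ((p k - 1) * (hconj (p k) - 1) *
      (\sum_(l | l != k) bx l - \sum_(l | l != k) ax l)); first ring.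
    by rewrite hqr mul1r.
  done.
rewrite /mu.
apply: (@le_trans _ _ (\sum_(k | k != i) \sum_(l | l != k) (bx l - ax l))).
  rewrite -[X in _ <= X]expRK ler_ln ?posrE ?expR_gt0 //.
    rewrite expR_sum; apply: ler_prod => k hk; have /andP[h1 h2] := hFk k hk.
    by rewrite h2 ltW.
  by apply: prodr_gt0 => k hk; have /andP[] := hFk k hk.
rewrite (eq_bigr (fun k => \sum_(l | l != k) (if l == i then
   (hconj (p i) - 1) * \sum_(l' | l' != i) (bl l' - al l') else bl l - al l))); last first.
  move=> k _; apply: eq_bigr => l _; rewrite /ax /bx; case: ifP => _ //.
  by rewrite /Sa /Sb sumrB mulrBr.
rewrite comb; apply: ler_sum => l hl; apply: ler_wpM2r; first exact: hw0.
have := hpk l hl; rewrite subrK; lra.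
Qed.
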